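(* Let $G=(G'_\ell,A'_\ell,B'_\ell)\circ\cdots\circ(G'_1,A'_1,B'_1)\circ G'_0$ be the compact canonical decomposition of a graph $G$. For $S\subseteq V(G)$ let $S_i=S\cap V(G'_i)$. Then $S$ is a fixing set of $G$ if and only if $S_i$ is a fixing set of $G'_i$ for every $i=0,1,\dots,\ell$. Consequently $\mathrm{Fix}(G)=\sum_{i=0}^{\ell}\mathrm{Fix}(G'_i)$.
   Context: All graphs are finite and simple. A set $S\subseteq V(G)$ is a fixing set of $G$ if the only automorphism of $G$ fixing every vertex of $S$ is the identity; $\mathrm{Fix}(G)$ is the minimum size of a fixing set. A graph is split if its vertex set can be partitioned into $A$ (inducing a complete graph) and $B$ (inducing an independent set), either possibly empty; $(A,B)$ is a $KS$-partition. For split $(G,A,B)$ with $V(G)\neq\emptyset$ and a graph $H$, $V(H)\ne\emptyset$, on disjoint vertices, $(G,A,B)\circ H$ is the graph on $V(G)\cup V(H)$ with edge set $E(G)\cup E(H)\cup\{uv:u\in A,v\in V(H)\}$ (associative; iterated compositions read right-nested). A graph is indecomposable if it is not isomorphic to any such composition. Canonical decomposition (Tyshkevich): every graph is $G=(G_k,A_k,B_k)\circ\cdots\circ(G_1,A_1,B_1)\circ G_0$ with every $G_i$ indecomposable, unique up to componentwise isomorphism. A single-vertex component $(G_i,A_i,B_i)$, $i\ge1$, has type $K_1$ if $A_i=V(G_i)$ and type $S_1$ if $B_i=V(G_i)$; if $G_0$ and $G_1$ are both single-vertex graphs, $G_0$ gets the type of $G_1$. The compact canonical decomposition is obtained by replacing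 each maximal run of consecutive single-vertex components of the same type by a single component: $m$ components of type $K_1$ by $K_m$ with $KS$-partition $(V(K_m),\emptyset)$, and $m$ components of type $S_1$ by the edgeless graph on $m$ vertices with $KS$-partition $(\emptyset,\text{all vertices})$ (a run containing $G_0$ yields the new $G'_0$). *)

(* Defs.v *)
(* Graphs are symmetric irreflexive relations on a finType. *)
From mathcomp Require Import all_boot fingroup perm.
Set Implicit Arguments. Unset Strict Implicit. Unset Printing Implicit Defensive.


Definition is_aut {T : finType} (e : rel T) (f : {perm T}) : bool :=
  [forall x, forall y, e (f x) (f y) == e x y].

Definition fixing_set {T : finType} (e : rel T) (S : {set T}) : bool :=
  [forall f : {perm T},
     (is_aut e f && [forall x in S, f x == x]) ==> (f == 1%g)].

(* Fix(G): minimum size of a fixing set (V(G) itself is always fixing). *)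
Definition Fix {T : finType} (e : rel T) : nat :=
  \big[minn/#|T|]_(S : {set T} | fixing_set e S) #|S|.

Definition induced {T : finType} (e : rel T) (V : {set T}) : rel {x : T | x \in V} :=
  fun x y => e (val x) (val y).

Definition trace {T : finType} (V S : {set T}) : {set {x : T | x \in V}} :=
  [set x | val x \in S].
Arguments induced {T} e V _ _.
Arguments trace {T} V S.

(* G is decomposable: it is (isomorphic to) a composition (G1,A,B) o H with
   V(G1) = X, V(H) = Y both nonempty, A clique, B = X \ A independent,
   A complete to Y, B anticomplete to Y (written out on V(G) itself). *)
Definition decomposable {T : finType} (e : rel T) : Prop :=
  exists X Y A : {set T},
    [/\ [disjoint X & Y], X :|: Y = setT, X != set0, Y != set0 &
    [/\ A \subset X,
        (forall a b, a \in A -> b \in A -> a != b -> e a b),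
        (forall a b, a \in X :\: A -> b \in X :\: A -> ~~ e a b),
        (forall a y, a \in A -> y \in Y -> e a y) &
        (forall b y, b \in X :\: A -> y \in Y -> ~~ e b y)]].

Definition indecomposable {T : finType} (e : rel T) : Prop := ~ decomposable e.

(* A decomposition of G = (T,e) is described by a labelling lab : T -> nat
   (component index of each vertex, 0..k) and the set A collecting the clique
   parts A_i of the split components (i >= 1); B_i = V(G_i) \ A. *)
Definition comp {T : finType} (lab : T -> nat) (i : nat) : {set T} := [set x | lab x == i].

Definition canonical_decomposition {T : finType} (e : rel T) (k : nat) (lab : T -> nat)
  (A : {set T}) : Prop :=
  [/\ (forall x, lab x <= k),
      (forall i, i <= k -> exists x, lab x = i) &
   [/\
      (* (G_i, A_i, B_i) is split with KS-partition (A_i, B_i), i >= 1 *)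
      (forall x y, lab x = lab y -> 1 <= lab x -> x \in A -> y \in A ->
                   x != y -> e x y),
      (forall x y, lab x = lab y -> 1 <= lab x -> x \notin A -> y \notin A ->
                   ~~ e x y),
      (* right-nested composition: a vertex of G_i (i > j) is adjacent to all
         of V(G_j) if it lies in A_i and to none of it otherwise *)
      (forall x y, lab y < lab x -> e x y = (x \in A)) &
      (forall i, i <= k -> indecomposable (induced e (comp lab i)))]].

Definition single {T : finType} (lab : T -> nat) (i : nat) : bool := #|comp lab i| == 1.
(* type of a single-vertex component: true = K_1, false = S_1 *)
Definition ctype {T : finType} (lab : T -> nat) (A : {set T}) (i : nat) : bool :=
  [exists x in comp lab i, x \in A].
(* component j >= 1 is merged with component j-1: both single-vertex and of
   the same type (G_0 takes the type of G_1 when both are single vertices) *)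
Definition merges {T : finType} (lab : T -> nat) (A : {set T}) (j : nat) : bool :=
  [&& 1 <= j, single lab j, single lab j.-1 &
      (j == 1) || (ctype lab A j == ctype lab A j.-1)].
(* index in the compact decomposition of the old component i *)
Definition cidx {T : finType} (lab : T -> nat) (A : {set T}) (i : nat) : nat :=
  i - \sum_(1 <= j < i.+1) (merges lab A j : nat).
Definition ccomp {T : finType} (lab : T -> nat) (A : {set T}) (i : nat) : {set T} :=
  [set x | cidx lab A (lab x) == i].

(* Main.v *)
Require Import Defs.
From mathcomp Require Import all_boot fingroup perm.
From mathcomp Require Import zify.
Set Implicit Arguments. Unset Strict Implicit. Unset Printing Implicit Defensive.

Lemma disjP (T : finType) (X Y : {set T}) :
  reflect (forall x, x \in X -> x \in Y -> False) [disjoint X & Y].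
Proof.
rewrite disjoints_subset; apply: (iffP subsetP) => h x hx.
- by move=> hy; have := h x hx; rewrite inE hy.
- by rewrite inE; apply/negP => hy; exact: h x hx hy.
Qed.

Lemma mk_decomp (T : finType) (e : rel T) (V X Y A : {set T}) x0 y0 :
  X :|: Y = V -> [disjoint X & Y] -> x0 \in X -> y0 \in Y -> A \subset X ->
  (forall a b, a \in A -> b \in A -> a != b -> e a b) ->
  (forall a b, a \in X :\: A -> b \in X :\: A -> ~~ e a b) ->
  (forall a y, a \in A -> y \in Y -> e a y) ->
  (forall b y, b \in X :\: A -> y \in Y -> ~~ e b y) ->
  decomposable (induced e V).
Proof.
move=> hU hD hx0 hy0 hAX h1 h2 h3 h4.
have XV : X \subset V by rewrite -hU subsetUl.
have YV : Y \subset V by rewrite -hU subsetUr.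
exists [set z | val z \in X], [set z | val z \in Y], [set z | val z \in A].
split.
- apply/disjP => z; rewrite !inE => hx hy; exact: (disjP _ _ hD _ hx hy).
- apply/setP => z; rewrite !inE; have hz : val z \in X :|: Y by rewrite hU; exact: (valP z).
  by rewrite inE in hz.
- apply/set0Pn; exists (Sub x0 (subsetP XV _ hx0)); by rewrite inE.
- apply/set0Pn; exists (Sub y0 (subsetP YV _ hy0)); by rewrite inE.
split.
- apply/subsetP => z; rewrite !inE; exact: (subsetP hAX).
- move=> a b; rewrite !inE /induced => ha hb hab; apply: h1 => //.
- move=> a b; rewrite !inE /induced => /andP[ha1 ha2] /andP[hb1 hb2]; apply: h2;
  by rewrite inE ?ha1 ?ha2 ?hb1 ?hb2.
- move=> a y; rewrite !inE /induced => ha hy; exact: h3.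
- move=> a y; rewrite !inE /induced => /andP[ha1 ha2] hy; apply: h4 => //;
  by rewrite inE ha1 ha2.
Qed.

Lemma const_decomp (T : finType) (e : rel T) (V : {set T}) x0 x1 c :
  irreflexive e ->
  x0 \in V -> x1 \in V -> x0 != x1 ->
  (forall a b, a \in V -> b \in V -> a != b -> e a b = c) ->
  decomposable (induced e V).
Proof.
move=> hirr h0 h1 h01 hc.
apply: (@mk_decomp _ _ V [set x0] (V :\ x0) (if c then [set x0] else set0) x0 x1).
- by rewrite setD1K.
- by rewrite disjoints1 !inE eqxx.
- by rewrite inE.
- by rewrite !inE eq_sym h01.
all: case: c hc => hc; rewrite ?sub0set ?sub1set ?inE //.
all: try (move=> a b; rewrite !inE).
- by move=> /eqP-> /eqP->; rewrite eqxx.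
- by [].
- by case/andP=> /negP.
- by move=> /= /eqP-> /eqP->; rewrite hirr.
- by move=> /eqP-> /andP[hb hV]; rewrite hc // eq_sym.
- by [].
- by case/andP=> /negP.
- by move=> /= /eqP-> /andP[hb hV]; rewrite hc // eq_sym.
Qed.


Definition cid (m : nat -> bool) n := n - \sum_(1 <= j < n.+1) (m j : nat).

Lemma cid_sum (m : nat -> bool) n : \sum_(1 <= j < n.+1) (m j : nat) <= n /\
  \sum_(1 <= j < n.+2) (m j : nat) = \sum_(1 <= j < n.+1) (m j : nat) + m n.+1.
Proof.
split; last by rewrite big_nat_recr.
elim: n => [|n IH]; first by rewrite big_geq.
rewrite big_nat_recr //=; move: IH; case: (m n.+1) => /=; rewrite ?addn0 ?addn1; try lia.
Qed.

Lemma cidS (m : nat -> bool) n : cid m n.+1 = cid m n + ~~ m n.+1.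
Proof.
rewrite /cid; have [h1 h2] := cid_sum m n; rewrite h2.
case: (m n.+1) => /=; lia.
Qed.

Lemma cid0 (m : nat -> bool) : cid m 0 = 0.
Proof. by []. Qed.

Lemma cid_mono (m : nat -> bool) a b : a <= b -> cid m a <= cid m b.
Proof.
move=> hab; rewrite -(subnKC hab); elim: (b - a) => [|n IH]; first by rewrite addn0.
by rewrite addnS cidS; apply: leq_trans IH (leq_addr _ _).
Qed.

Lemma cid_merge (m : nat -> bool) a b : cid m a = cid m b -> forall j, a < j -> j <= b -> m j.
Proof.
move=> hab j haj hjb; apply/negPn/negP => hj.
have := cid_mono m (ltnW haj); have := cid_mono m hjb.
case: j haj hjb hj => // j haj hjb hj; rewrite cidS hj /=.
move: (cid_mono m (haj : a <= j)); lia.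
Qed.

Lemma bigmin_le (I : eqType) (r : seq I) (P : pred I) (F : I -> nat) d i0 :
  i0 \in r -> P i0 -> \big[minn/d]_(i <- r | P i) F i <= F i0.
Proof.
elim: r => // a r IH; rewrite inE big_cons => /orP[/eqP<- ->|hi hp].
  exact: geq_minl.
case: (P a); last exact: IH.
exact: leq_trans (geq_minr _ _) (IH hi hp).
Qed.

Lemma bigmin_att (I : eqType) (r : seq I) (P : pred I) (F : I -> nat) d :
  \big[minn/d]_(i <- r | P i) F i = d \/
  exists2 i, P i & \big[minn/d]_(i <- r | P i) F i = F i.
Proof.
elim: r => [|a r IH]; first by left; rewrite big_nil.
rewrite big_cons; case hP: (P a); last by [].
set s := \big[minn/d]_(i <- r | P i) F i in IH *.
case: (leqP (F a) s) => h; last exact: IH.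
by right; exists a.
Qed.

Lemma fixing_setT (U : finType) (e : rel U) : fixing_set e setT.
Proof.
apply/forallP => f; apply/implyP => /andP[_ /forallP h]; apply/eqP/permP => x.
by rewrite perm1; apply/eqP; move: (h x); rewrite inE.
Qed.

Lemma Fix_le (U : finType) (e : rel U) S : fixing_set e S -> Fix e <= #|S|.
Proof. by move=> hS; apply: bigmin_le => //; rewrite mem_index_enum. Qed.

Lemma Fix_att (U : finType) (e : rel U) : exists2 S, fixing_set e S & #|S| = Fix e.
Proof.
rewrite /Fix; case: (bigmin_att (index_enum {set U}) (fixing_set e) (fun S : {set U} => #|S|) #|U|) => [->|[S hS ->]]; last by exists S.
by exists setT; [apply: fixing_setT | rewrite cardsT].
Qed.

Definition cutp {T : finType} (e : rel T) (X Y A : {set T}) : Prop :=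
  [/\ [disjoint X & Y], X :|: Y = setT, X != set0, Y != set0 &
    [/\ A \subset X,
        (forall a b, a \in A -> b \in A -> a != b -> e a b),
        (forall a b, a \in X :\: A -> b \in X :\: A -> ~~ e a b),
        (forall a y, a \in A -> y \in Y -> e a y) &
        (forall b y, b \in X :\: A -> y \in Y -> ~~ e b y)]].

Lemma autP (T : finType) (e : rel T) (f : {perm T}) :
  is_aut e f -> forall x y, e (f x) (f y) = e x y.
Proof. by move=> /forallP h x y; apply/eqP; move/forallP: (h x) => /(_ y). Qed.

Lemma cut_mem (T : finType) (e : rel T) X Y A' x :
  cutp e X Y A' -> (x \in X) = (x \notin Y).
Proof.
case=> hD hU _ _ _; case hx: (x \in X); case hy: (x \in Y) => //.
  by case: (disjP _ _ hD x hx hy).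
have : x \in X :|: Y by rewrite hU inE.
by rewrite inE hx hy.
Qed.

Lemma cut_e (T : finType) (e : rel T) X Y A' x y :
  cutp e X Y A' -> x \in X -> y \in Y -> e x y = (x \in A').
Proof.
case=> _ _ _ _ [hAX _ _ hc ha] hx hy; case hxa: (x \in A'); first exact: hc.
by apply/negbTE/ha; rewrite // inE hxa hx.
Qed.

Lemma cut_in (T : finType) (e : rel T) X Y A' x y :
  cutp e X Y A' -> x \in X -> y \in X -> x != y -> (x \in A') = (y \in A') ->
  e x y = (x \in A').
Proof.
case=> _ _ _ _ [hAX hcl hind _ _] hx hy hxy hxyA; case hxa: (x \in A').
  by apply: hcl => //; rewrite -hxyA.
by apply/negbTE/hind; rewrite inE ?hx ?hy ?hxa -?hxyA ?hxa.
Qed.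

Lemma cut_preim (T : finType) (e : rel T) (f : {perm T}) X Y A' :
  is_aut e f -> cutp e X Y A' -> cutp e (f @^-1: X) (f @^-1: Y) (f @^-1: A').
Proof.
move=> /autP hf [hD hU hX hY [hAX hcl hind hc han]]; split.
- apply/disjP => x; rewrite !inE => h1 h2; exact: (disjP _ _ hD _ h1 h2).
- apply/setP => x; rewrite !inE -in_setU hU inE //.
- case/set0Pn: hX => x hx; apply/set0Pn; exists ((f^-1)%g x); by rewrite inE permKV.
- case/set0Pn: hY => x hx; apply/set0Pn; exists ((f^-1)%g x); by rewrite inE permKV.
split.
- by apply/subsetP => x; rewrite !inE; apply: (subsetP hAX).
- move=> a b; rewrite !inE -hf => ha hb hab; apply: hcl => //.
  by apply: contra hab => /eqP/perm_inj ->.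
- move=> a b; rewrite !inE -hf => /andP[ha1 ha2] /andP[hb1 hb2]; apply: hind;
  by rewrite inE ?ha1 ?ha2 ?hb1 ?hb2.
- move=> a y; rewrite !inE -hf => ha hy; exact: hc.
- move=> a y; rewrite !inE -hf => /andP[ha1 ha2] hy; apply: han => //;
  by rewrite inE ha1 ha2.
Qed.

Lemma Ucut (T : finType) (e : rel T) k lab A j :
  symmetric e -> canonical_decomposition e k lab A -> j < k ->
  cutp e [set x | j < lab x] [set x | lab x <= j] (A :&: [set x | j < lab x]).
Proof.
move=> hsym [Hk Hex [Hcl Hind Hcross Hdec]] hjk; split.
- apply/disjP => x; rewrite !inE; lia.
- apply/setP => x; rewrite !inE; case: ltnP => //.
- case: (Hex k (leqnn k)) => x hx; apply/set0Pn; exists x; by rewrite inE hx.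
- case: (Hex 0 (leq0n k)) => x hx; apply/set0Pn; exists x; by rewrite inE hx.
split.
- exact: subsetIr.
- move=> a b; rewrite !inE => /andP[ha1 ha2] /andP[hb1 hb2] hab.
  case: (ltngtP (lab a) (lab b)) => h.
  + by rewrite hsym Hcross.
  + by rewrite Hcross.
  + apply: Hcl => //; lia.
- move=> a b; rewrite !inE => /andP[ha1 ha2] /andP[hb1 hb2].
  have ha : a \notin A by move: ha1; rewrite ha2 andbT.
  have hb : b \notin A by move: hb1; rewrite hb2 andbT.
  case: (ltngtP (lab a) (lab b)) => h.
  + by rewrite hsym Hcross.
  + by rewrite Hcross.
  + apply: Hind => //; lia.
- move=> a y; rewrite !inE => /andP[ha1 ha2] hy; rewrite Hcross //; lia.
- move=> a y; rewrite !inE => /andP[ha1 ha2] hy; rewrite Hcross; last lia.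
  by move: ha1; rewrite ha2 andbT.
Qed.

Lemma no_split (T : finType) (e : rel T) k lab A X Y A' a b :
  canonical_decomposition e k lab A -> cutp e X Y A' ->
  a \in X -> b \in Y -> lab a = lab b -> False.
Proof.
move=> [Hk Hex [Hcl Hind Hcross Hdec]] hcut ha hb hab.
have hc := hcut; case: hc => hD hU _ _ [hAX hcl hind hc han].
apply: (Hdec (lab a) (Hk a)).
apply: (@mk_decomp _ _ (Defs.comp lab (lab a)) (X :&: Defs.comp lab (lab a))
          (Y :&: Defs.comp lab (lab a)) (A' :&: Defs.comp lab (lab a)) a b).
- by rewrite -setIUl hU setTI.
- apply/disjP => x; rewrite !inE => /andP[h1 _] /andP[h2 _]; exact: (disjP _ _ hD _ h1 h2).
- by rewrite !inE ha eqxx.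
- by rewrite !inE hb hab eqxx.
- by apply: setSI.
- move=> x y; rewrite !inE => /andP[h1 _] /andP[h2 _]; exact: hcl.
- move=> x y; rewrite !inE => /andP[h1 /andP[h2 h3]] /andP[h4 /andP[h5 h6]].
  apply: hind; rewrite inE ?h2 ?h5 andbT.
  + by move: h1; rewrite h3 andbT.
  + by move: h4; rewrite h6 andbT.
- move=> x y; rewrite !inE => /andP[h1 _] /andP[h2 _]; exact: hc.
- move=> x y; rewrite !inE => /andP[h1 /andP[h2 h3]] /andP[h4 _].
  apply: han => //; rewrite inE h2 andbT; by move: h1; rewrite h3 andbT.
Qed.

Lemma single_between (T : finType) (e : rel T) k lab A X Y A' xb ya m :
  symmetric e -> irreflexive e -> canonical_decomposition e k lab A ->
  cutp e X Y A' -> xb \in X -> ya \in Y -> lab xb <= m -> m <= lab ya ->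
  single lab m.
Proof.
move=> hsym hirr hcd hcut hxb hya h1 h2.
have hcd' := hcd; case: hcd' => Hk Hex [Hcl Hind Hcross Hdec].
have hmk : m <= k by apply: leq_trans h2 (Hk ya).
rewrite /single; apply/negPn/negP => hns.
case: (Hex m hmk) => x hx.
have : 1 < #|Defs.comp lab m|.
  rewrite ltn_neqAle eq_sym hns /= card_gt0; apply/set0Pn; exists x; by rewrite inE hx.
case/card_gt1P => x0 [x1 [hx0 hx1 h01]].
apply: (Hdec m hmk).
case: (boolP [exists z in Defs.comp lab m, z \in Y]) => [/existsP [z /andP[hzV hzY]] | hnone].
- have allY : forall a, lab a = m -> a \in Y.
    move=> a ha; apply/negPn/negP => haY.
    rewrite -(cut_mem _ hcut) in haY.
    by apply: (no_split hcd hcut haY hzY); move: hzV; rewrite inE => /eqP->.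
  have hlt : lab xb < m.
    rewrite ltn_neqAle h1 andbT; apply/eqP => /allY.
    by rewrite -(negbK (xb \in Y)) -(cut_mem _ hcut) hxb.
  have hA : forall a, lab a = m -> (a \in A) = (xb \in A').
    move=> a ha; rewrite -(cut_e hcut hxb (allY a ha)) hsym Hcross //; lia.
  apply: (const_decomp (c := xb \in A') hirr hx0 hx1 h01) => a b; rewrite !inE.
  move=> /eqP ha /eqP hb hab; case hxa: (xb \in A').
  + apply: Hcl; rewrite ?hA ?ha ?hb //; lia.
  + apply/negbTE/Hind; rewrite ?hA ?ha ?hb ?hxa //; lia.
- have allX : forall a, lab a = m -> a \in X.
    move=> a ha; rewrite (cut_mem _ hcut); apply: contra hnone => haY.
    by apply/existsP; exists a; rewrite inE ha eqxx.
  have hlt : m < lab ya.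
    rewrite ltn_neqAle h2 andbT; apply/eqP => /esym /allX.
    by rewrite (cut_mem _ hcut) hya.
  have hA : forall a, lab a = m -> (a \in A') = (ya \in A).
    move=> a ha; rewrite -(cut_e hcut (allX a ha) hya) hsym Hcross //; lia.
  apply: (const_decomp (c := ya \in A) hirr hx0 hx1 h01) => a b; rewrite !inE.
  move=> /eqP ha /eqP hb hab; rewrite (cut_in hcut) ?allX ?hA //.
Qed.

Lemma ctype_single (T : finType) lab (A : {set T}) m z :
  Defs.comp lab m = [set z] -> ctype lab A m = (z \in A).
Proof.
move=> hz; rewrite /ctype hz; apply/existsP/idP => [[x /andP[/set1P -> //]]|h].
by exists z; rewrite inE eqxx h.
Qed.

Lemma no_cross (T : finType) (e : rel T) k lab A X Y A' j xb ya :
  symmetric e -> irreflexive e -> canonical_decomposition e k lab A ->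
  cutp e X Y A' -> j < k -> ~~ merges lab A j.+1 ->
  xb \in X -> lab xb <= j -> ya \in Y -> j < lab ya -> False.
Proof.
move=> hsym hirr hcd hcut hjk hm hxb hlxb hya hlya.
have hcd' := hcd; case: hcd' => Hk Hex [Hcl Hind Hcross Hdec].
have sj : single lab j.
  by apply: (single_between hsym hirr hcd hcut hxb hya) => //; lia.
have sj1 : single lab j.+1.
  by apply: (single_between hsym hirr hcd hcut hxb hya) => //; lia.
move: (sj) (sj1) => /cards1P[u hu] /cards1P[w hw].
have uu : forall z, lab z = j -> z = u.
  by move=> z hz; apply/set1P; rewrite -hu inE hz.
have ww : forall z, lab z = j.+1 -> z = w.
  by move=> z hz; apply/set1P; rewrite -hw inE hz.
have lu : lab u = j by have := set11 u; rewrite -hu inE => /eqP.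
have lw : lab w = j.+1 by have := set11 w; rewrite -hw inE => /eqP.
move: hm; rewrite /merges /= sj sj1 (ctype_single A hu) (ctype_single A hw) /=.
rewrite negb_or => /andP[hj0 hne].
have j0 : 0 < j by move: hj0; rewrite eqSS; lia.
have F1 : forall x y, x \notin Y -> y \in Y -> lab x < lab y ->
    (x \in A') = (y \in A).
  move=> x y hx hy hxy; have hX : x \in X by rewrite (cut_mem _ hcut).
  by rewrite -(cut_e hcut hX hy) hsym Hcross.
have F2 : forall x y, x \notin Y -> y \in Y -> lab y < lab x ->
    (x \in A') = (x \in A).
  move=> x y hx hy hxy; have hX : x \in X by rewrite (cut_mem _ hcut).
  by rewrite -(cut_e hcut hX hy) Hcross.
have F3 : forall x y, x \notin Y -> y \notin Y -> lab x < lab y ->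
    (x \in A') = (y \in A') -> e x y = (x \in A').
  move=> x y hx hy hxy hxyA; apply: (cut_in hcut) => //; rewrite ?(cut_mem _ hcut) //.
  by apply: contraTneq hxy => ->; rewrite ltnn.
have F4 : forall x y, lab x < lab y -> e x y = (y \in A).
  by move=> x y h; rewrite hsym Hcross.
have hxbY : xb \notin Y by rewrite -(cut_mem _ hcut).
have HuA : u \notin Y ->
    (forall z, z \notin Y -> lab z < j -> (z \in A') = (u \in A')) ->
    (u \in A) = (u \in A').
  move=> huY H.
  case: (boolP [exists z, (z \in Y) && (lab z < j)]) => [/existsP[z /andP[hz hlz]]|hno].
    by rewrite (F2 u z) // lu.
  case: (Hex j.-1 _) => [|z0 hz0]; first lia.
  have hlz0 : lab z0 < j by rewrite hz0; lia.
  have hz0Y : z0 \notin Y.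
    by apply: contra hno => hzY; apply/existsP; exists z0; rewrite hzY hlz0.
  have hl : lab z0 < lab u by rewrite lu.
  rewrite -(F4 z0 u hl) (F3 z0 u hz0Y huY hl) ?H //.
case huY: (u \in Y); case hwY: (w \in Y).
- have hlxb' : lab xb < j.
    rewrite ltn_neqAle hlxb andbT; apply/eqP => /uu hx.
    by move: hxbY; rewrite hx huY.
  move: hne; rewrite -(F1 xb u) ?lu // -(F1 xb w) ?lw ?eqxx //; lia.
- have hwY' : w \notin Y by rewrite hwY.
  have hlxb' : lab xb < j.
    rewrite ltn_neqAle hlxb andbT; apply/eqP => /uu hx.
    by move: hxbY; rewrite hx huY.
  have hlya' : j.+1 < lab ya.
    rewrite ltn_neqAle hlya andbT; apply/eqP => /esym /ww hy.
    by move: hya; rewrite hy hwY.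
  move: hne; rewrite -(F2 w u) ?lu ?lw // (F1 w ya) ?lw // -(F1 xb ya) //; last lia.
  by rewrite (F1 xb u) ?lu ?eqxx.
- have huY' : u \notin Y by rewrite huY.
  move: hne; rewrite -(F1 u w) ?lu ?lw // HuA ?eqxx // => z hz hlz.
  by rewrite (F1 z w) ?lw // ?(F1 u w) ?lu ?lw //; lia.
- have huY' : u \notin Y by rewrite huY.
  have hwY' : w \notin Y by rewrite hwY.
  have hlya' : j.+1 < lab ya.
    rewrite ltn_neqAle hlya andbT; apply/eqP => /esym /ww hy.
    by move: hya; rewrite hy hwY.
  have huw : (u \in A') = (w \in A').
    by rewrite (F1 u ya) ?lu // ?(F1 w ya) ?lw //; lia.
  have h1 := F4 u w (ltac:(by rewrite lu lw)).
  have h2 := F3 u w huY' hwY' (ltac:(by rewrite lu lw)) huw.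
  move: hne; rewrite -h1 h2 HuA ?eqxx // => z hz hlz.
  by rewrite (F1 z ya) ?(F1 u ya) ?lu //; lia.
Qed.

Lemma aut_lab (T : finType) (e : rel T) k lab A (f : {perm T}) j :
  symmetric e -> irreflexive e -> canonical_decomposition e k lab A ->
  is_aut e f -> j < k -> ~~ merges lab A j.+1 ->
  forall x, (lab (f x) <= j) = (lab x <= j).
Proof.
move=> hsym hirr hcd hf hjk hm.
have hU := Ucut hsym hcd hjk.
have hP := cut_preim hf hU.
set Y0 := [set x | lab x <= j] in hU hP *.
have hsub : (f @^-1: Y0 \subset Y0) || (Y0 \subset f @^-1: Y0).
  case: (boolP (f @^-1: Y0 \subset Y0)) => //= /subsetPn [ya hya1 hya0].
  apply/subsetP => xb hxb0; apply/negPn/negP => hxb1.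
  apply: (no_cross hsym hirr hcd hP hjk hm (xb:=xb) (ya:=ya)) => //.
  - by rewrite (cut_mem _ hP).
  - by move: hxb0; rewrite inE.
  - by move: hya0; rewrite inE -ltnNge.
have hc : #|f @^-1: Y0| = #|Y0| := card_preimset _ perm_inj.
have heq : f @^-1: Y0 = Y0.
  case/orP: hsub => h; apply/eqP; first by rewrite eqEcard h hc leqnn.
  by rewrite eq_sym eqEcard h hc leqnn.
move=> x; move/setP: heq => /(_ x); by rewrite !inE.
Qed.

Lemma cid_break (m : nat -> bool) a b : a <= b -> cid m a != cid m b ->
  exists j, [/\ a < j, j <= b & ~~ m j].
Proof.
elim: b => [|b IH] hab hne.
  by move: hab hne; rewrite leqn0 => /eqP -> /eqP.
case: (leqP a b) => h.
  case hm: (m b.+1).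
    rewrite cidS hm addn0 in hne; have [j [h1 h2 h3]] := IH h hne.
    by exists j; split => //; apply: leqW.
  by exists b.+1; rewrite hm.
have hab' : a = b.+1 by apply/eqP; rewrite eqn_leq hab h.
by rewrite hab' eqxx in hne.
Qed.

Lemma aut_cidx (T : finType) (e : rel T) k lab A (f : {perm T}) :
  symmetric e -> irreflexive e -> canonical_decomposition e k lab A ->
  is_aut e f -> forall x, cidx lab A (lab (f x)) = cidx lab A (lab x).
Proof.
move=> hsym hirr hcd hf x.
have hcd' := hcd; case: hcd' => Hk Hex _.
have key : forall y z, lab y <= lab z -> lab z <= k ->
    cidx lab A (lab y) != cidx lab A (lab z) ->
    exists j, [/\ j < k, ~~ merges lab A j.+1, lab y <= j & j < lab z].
  move=> y z hyz hzk hne.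
  have [j [h1 h2 h3]] := cid_break (m := merges lab A) hyz hne.
  exists j.-1; rewrite prednK; last lia.
  split => //; lia.
apply/eqP/negPn/negP => hne.
case: (leqP (lab x) (lab (f x))) => h.
  have hne' : cidx lab A (lab x) != cidx lab A (lab (f x)) by rewrite eq_sym.
  have [j [h1 h2 h3 h4]] := key x (f x) h (Hk _) hne'.
  have := aut_lab hsym hirr hcd hf h1 h2 x.
  by rewrite h3 leqNgt h4.
have [j [h1 h2 h3 h4]] := key (f x) x (ltnW h) (Hk _) hne.
have := aut_lab hsym hirr hcd hf h1 h2 x.
by rewrite h3 leqNgt h4.
Qed.

Lemma KS (T : finType) (e : rel T) (A V : {set T}) (h : {perm T}) :
  symmetric e ->
  (forall x, x \in V -> h x \in V) ->
  (forall a b, a \in V -> b \in V -> e (h a) (h b) = e a b) ->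
  (forall a b, a \in V -> b \in V -> a \in A -> b \in A -> a != b -> e a b) ->
  (forall a b, a \in V -> b \in V -> a \notin A -> b \notin A -> ~~ e a b) ->
  indecomposable (induced e V) ->
  forall x, x \in V -> (h x \in A) = (x \in A).
Proof.
move=> hsym hV he Hcl Hind hdec.
set P := V :&: A; set hP := h @: P.
have hVV : h @: V = V.
  apply/eqP; rewrite eqEcard card_imset ?leqnn ?andbT; last exact: perm_inj.
  by apply/subsetP => _ /imsetP[y hy ->]; exact: hV.
have cardP : #|hP| = #|P| by rewrite card_imset //; exact: perm_inj.
have memhP : forall z, (h z \in hP) = (z \in P) by move=> z; rewrite mem_imset //; exact: perm_inj.
case: (boolP (hP == P)) => [/eqP heq | hne].
  move=> x hx; have := memhP x; rewrite heq !inE hx hV //.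
exfalso; apply: hdec.
have : ~~ (P \subset hP).
  by apply: contra hne => hs; rewrite eq_sym eqEcard hs cardP leqnn.
case/subsetPn => a haP hahP.
have : ~~ (hP \subset P).
  by apply: contra hne => hs; rewrite eqEcard hs cardP leqnn.
case/subsetPn => b hbhP hbP.
have haV : a \in V by move: haP; rewrite inE => /andP[].
have haA : a \in A by move: haP; rewrite inE => /andP[].
have hbV : b \in V.
  by case/imsetP: hbhP => p; rewrite inE => /andP[hp _] ->; exact: hV.
have hbA : b \notin A by move: hbP; rewrite inE hbV.
have clhP : forall z z', z \in hP -> z' \in hP -> z != z' -> e z z'.
  move=> z z' /imsetP[p hp ->] /imsetP[p' hp' ->] hz.
  move: hp hp'; rewrite !inE => /andP[hp1 hp2] /andP[hp1' hp2'].
  rewrite he // Hcl //; by apply: contra hz => /eqP->.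
have indhP : forall z z', z \in V -> z' \in V -> z \notin hP -> z' \notin hP -> ~~ e z z'.
  move=> z z'; rewrite -hVV => /imsetP[p hp ->] /imsetP[p' hp' ->].
  rewrite !memhP !inE hp hp' /= => hpA hpA'; rewrite he //; exact: Hind.
have uniqA : forall z, z \in P -> z \notin hP -> z = a.
  move=> z hzP hzhP; apply/eqP/negPn/negP => hza.
  move: (hzP) (haP); rewrite !inE => /andP[hzV hzA] _.
  by have := indhP z a hzV haV hzhP hahP; rewrite Hcl.
have uniqB : forall z, z \in hP -> z \notin P -> z = b.
  move=> z hzhP hzP; apply/eqP/negPn/negP => hzb.
  have hzV : z \in V by case/imsetP: hzhP => p; rewrite inE => /andP[hp _] ->; exact: hV.
  have hzA : z \notin A by move: hzP; rewrite inE hzV.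
  by have := Hind z b hzV hbV hzA hbA; rewrite clhP.
have hab : a != b by apply: contra hbP => /eqP <-.
case eab: (e a b).
- apply: (@mk_decomp _ _ V (V :\ b) [set b] P a b).
  + by rewrite setUC setD1K.
  + by rewrite disjoint_sym disjoints1 !inE eqxx.
  + by rewrite !inE hab haV.
  + by rewrite inE.
  + apply/subsetP => z hz; rewrite !inE; move: (hz); rewrite inE => /andP[-> _].
    by rewrite andbT; apply: contra hbP => /eqP <-.
  + move=> z z'; rewrite !inE => /andP[h1 h2] /andP[h3 h4]; exact: Hcl.
  + move=> z z'; rewrite !inE => /andP[h1 /andP[_ h2]] /andP[h3 /andP[_ h4]].
    by apply: Hind => //; move: h1 h3; rewrite h2 h4.
  + move=> p y hp; rewrite inE => /eqP ->.
    case: (eqVneq p a) => [->|hpa]; first by [].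
    apply: clhP => //; last by apply: contra hbP => /eqP <-.
    by apply/negPn/negP => hphP; case/eqP: hpa; exact: uniqA.
  + move=> q y; rewrite !inE => /andP[h1 /andP[_ h2]] /eqP ->.
    by apply: Hind => //; move: h1; rewrite h2.
- apply: (@mk_decomp _ _ V (V :\ a) [set a] (P :\ a) b a).
  + by rewrite setUC setD1K.
  + by rewrite disjoint_sym disjoints1 !inE eqxx.
  + by rewrite !inE eq_sym hab hbV.
  + by rewrite inE.
  + apply/subsetP => z; rewrite !inE => /andP[-> /andP[-> _]] //.
  + move=> z z'; rewrite !inE => /andP[_ /andP[h1 h2]] /andP[_ /andP[h3 h4]]; exact: Hcl.
  + move=> z z'; rewrite !inE => /andP[h1 /andP[h1' h2]] /andP[h3 /andP[h3' h4]].
    by apply: Hind => //; move: h1 h3; rewrite h1' h2 h3' h4.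
  + move=> p y; rewrite !inE => /andP[hpa /andP[hpV hpA]] /eqP ->.
    exact: Hcl.
  + move=> q y; rewrite !inE => /andP[h1 /andP[hqa hqV]] /eqP ->.
    have hqP : q \notin P by move: h1; rewrite hqa inE.
    case: (eqVneq q b) => [->|hqb]; first by rewrite hsym eab.
    apply: indhP => //; apply/negP => hq; case/eqP: hqb; exact: uniqB.
Qed.

Lemma single_ctype (T : finType) lab (A : {set T}) m x :
  single lab m -> lab x = m -> ctype lab A m = (x \in A).
Proof.
move=> /cards1P[z hz] hx; rewrite (ctype_single A hz).
have : x \in Defs.comp lab m by rewrite inE hx.
by rewrite hz => /set1P ->.
Qed.

Lemma claimA (T : finType) lab (A : {set T}) x x' :
  cidx lab A (lab x) = cidx lab A (lab x') -> 0 < lab x -> lab x < lab x' ->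
  (x \in A) = (x' \in A).
Proof.
move=> hc h0 hlt.
have hm := cid_merge (m := merges lab A) hc.
have key : forall n, lab x + n <= lab x' ->
    single lab (lab x + n) /\ ctype lab A (lab x + n) = ctype lab A (lab x).
  elim=> [|n IH] hn.
    rewrite addn0; split => //.
    have := hm (lab x).+1 (ltnSn _) hlt; by rewrite /merges /= => /and3P[].
  have := hm (lab x + n).+1 ltac:(lia) ltac:(by rewrite -addnS).
  rewrite /merges /= => /and3P[h1 h2 h3].
  have [_ IH2] := IH ltac:(lia).
  rewrite addnS; split => //.
  move: h3; rewrite eqSS; have -> : (lab x + n == 0) = false by apply/eqP; lia.
  by move=> /= /eqP ->.
have [s1 s2] := key (lab x' - lab x) ltac:(lia).
have e1 : lab x + (lab x' - lab x) = lab x' by lia.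
rewrite e1 in s1 s2.
have [s0 _] := key 0 ltac:(lia); rewrite addn0 in s0.
by rewrite -(single_ctype A s0 (erefl _)) -s2 (single_ctype A s1 (erefl _)).
Qed.

Lemma restrict (T : finType) (V : {set T}) (f : {perm T}) :
  (forall x, x \in V -> f x \in V) ->
  exists g : {perm {x : T | x \in V}}, forall z, val (g z) = f (val z).
Proof.
move=> hf.
pose g0 (z : {x : T | x \in V}) : {x : T | x \in V} := Sub (f (val z)) (hf _ (valP z)).
have ginj : injective g0.
  by move=> z z' /(congr1 val); rewrite /g0 !SubK => /perm_inj /val_inj.
by exists (perm ginj) => z; rewrite permE /g0 SubK.
Qed.

Lemma extend (T : finType) (V : {set T}) (g : {perm {x : T | x \in V}}) :
  exists F : {perm T}, (forall z, F (val z) = val (g z)) /\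
                       (forall x, x \notin V -> F x = x).
Proof.
pose F0 (x : T) : T := if (insub x : option {x : T | x \in V}) is Some z then val (g z) else x.
have Finj : injective F0.
  move=> x y; rewrite /F0.
  case: insubP => [zx hx ex|hx]; case: insubP => [zy hy ey|hy] //.
  - by move/val_inj/perm_inj => ezz; rewrite -ex -ey ezz.
  - by move=> h; move: hy; rewrite -h (valP (g zx)).
  - by move=> h; move: hx; rewrite h (valP (g zy)).
exists (perm Finj); split.
  by move=> z; rewrite permE /F0 valK.
by move=> x hx; rewrite permE /F0 insubN.
Qed.

Lemma cidx_mono (T : finType) lab (A : {set T}) a b :
  a <= b -> cidx lab A a <= cidx lab A b.
Proof. exact: (cid_mono (merges lab A)). Qed.

Lemma ext_aut (T : finType) (e : rel T) k lab A i (F : {perm T}) :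
  symmetric e -> canonical_decomposition e k lab A ->
  (forall x, x \in ccomp lab A i -> F x \in ccomp lab A i) ->
  (forall x, x \notin ccomp lab A i -> F x = x) ->
  (forall a b, a \in ccomp lab A i -> b \in ccomp lab A i -> e (F a) (F b) = e a b) ->
  is_aut e F.
Proof.
move=> hsym hcd hV hout he.
have hcd' := hcd; case: hcd' => Hk Hex [Hcl Hind Hcross Hdec].
set V := ccomp lab A i in hV hout he *.
have inV : forall x, (x \in V) = (cidx lab A (lab x) == i) by move=> x; rewrite inE.
have below : forall x x' y, x \in V -> x' \in V -> y \notin V -> lab y < lab x ->
    lab y < lab x'.
  move=> x x' y hx hx' hy hl; rewrite ltnNge; apply/negP => hle.
  move: hx hx' hy; rewrite !inV => /eqP hx /eqP hx' /negP; apply; apply/eqP.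
  have h1 := cidx_mono lab A hle; have h2 := cidx_mono lab A (ltnW hl); lia.
have above : forall x x' y, x \in V -> x' \in V -> y \notin V -> lab x < lab y ->
    lab x' < lab y.
  move=> x x' y hx hx' hy hl; rewrite ltnNge; apply/negP => hle.
  move: hx hx' hy; rewrite !inV => /eqP hx /eqP hx' /negP; apply; apply/eqP.
  have h1 := cidx_mono lab A hle; have h2 := cidx_mono lab A (ltnW hl); lia.
have FA : forall x y, x \in V -> y \notin V -> lab y < lab x -> (F x \in A) = (x \in A).
  move=> x y hx hy hl.
  have hx' := hV x hx.
  have hl' := below x (F x) y hx hx' hy hl.
  have ci : cidx lab A (lab x) = cidx lab A (lab (F x)).
    by move: hx hx'; rewrite !inV => /eqP-> /eqP->.
  case: (ltngtP (lab x) (lab (F x))) => hc.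
  - by rewrite (claimA ci) //; lia.
  - by rewrite (claimA (esym ci)) //; lia.
  case: (boolP (single lab (lab x))) => hs.
    move: (hs) => /cards1P[z hz].
    have : x \in Defs.comp lab (lab x) by rewrite inE.
    have : F x \in Defs.comp lab (lab x) by rewrite inE hc.
    by rewrite hz => /set1P -> /set1P ->.
  have allm : forall z, z \in V -> lab z = lab x.
    move=> z hz; apply/eqP/negPn/negP => hne; move/negP: hs; apply.
    have cz : cidx lab A (lab z) = cidx lab A (lab x).
      by move: hz hx; rewrite !inV => /eqP-> /eqP->.
    case: (ltngtP (lab z) (lab x)) => hzx.
    - have := cid_merge (m := merges lab A) cz hzx (leqnn _).
      by rewrite /merges => /and4P[_ hh _ _].
    - have := cid_merge (m := merges lab A) (esym cz) (ltnSn _) hzx.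
      by rewrite /merges /= => /and3P[_ hh _].
    - by rewrite hzx eqxx in hne.
  have hVc : V = Defs.comp lab (lab x).
    apply/setP => z; rewrite [RHS]inE; apply/idP/idP => [/allm -> //|/eqP hz].
    by move: hx; rewrite !inV hz.
  apply: (KS (V := V) hsym hV he) => //.
  - move=> a b ha hb haA hbA hab; apply: Hcl => //; rewrite ?allm //; lia.
  - move=> a b ha hb haA hbA; apply: Hind => //; rewrite ?allm //; lia.
  - by rewrite hVc; apply: Hdec; apply: Hk.
have out : forall x y, x \in V -> y \notin V -> e (F x) y = e x y.
  move=> x y hx hy; have hx' := hV x hx.
  case: (ltngtP (lab y) (lab x)) => hl.
  - rewrite (Hcross x y hl) (Hcross (F x) y (below x (F x) y hx hx' hy hl)).
    exact: FA x y hx hy hl.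
  - rewrite (hsym (F x)) (hsym x) (Hcross y x hl) (Hcross y (F x)) //.
    exact: above x (F x) y hx hx' hy hl.
  - by move: hy; rewrite inV hl -inV hx.
apply/forallP => x; apply/forallP => y; apply/eqP.
case hx: (x \in V); case hy: (y \in V).
- exact: he.
- by rewrite (hout y) ?hy //; apply: out; rewrite ?hy.
- by rewrite (hout x) ?hx // hsym (hsym x); apply: out; rewrite ?hx.
- by rewrite !hout ?hx ?hy.
Qed.

Lemma part1 (T : finType) (e : rel T) (e_sym : symmetric e) (e_irr : irreflexive e)
  k lab A : canonical_decomposition e k lab A ->
  forall S : {set T}, fixing_set e S <->
     (forall i, i <= cidx lab A k ->
        fixing_set (induced e (ccomp lab A i)) (trace (ccomp lab A i) S)).
Proof.
move=> hcd S; have hcd' := hcd; case: hcd' => Hk Hex _.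
split.
- move=> hS i hi; apply/forallP => g; apply/implyP => /andP[hg /forallP hgS].
  have [F [FV Fout]] := extend g.
  have hFV : forall x, x \in ccomp lab A i -> F x \in ccomp lab A i.
    move=> x hx.
    have -> : x = val (Sub x hx : {x : T | x \in ccomp lab A i}) by rewrite SubK.
    rewrite FV; exact: valP.
  have hFe : forall a b, a \in ccomp lab A i -> b \in ccomp lab A i ->
      e (F a) (F b) = e a b.
    move=> a b ha hb.
    have -> : a = val (Sub a ha : {x : T | x \in ccomp lab A i}) by rewrite SubK.
    have -> : b = val (Sub b hb : {x : T | x \in ccomp lab A i}) by rewrite SubK.
    rewrite !FV; exact: (autP hg).
  have hF : is_aut e F := ext_aut e_sym hcd hFV Fout hFe.
  have hFS : [forall x in S, F x == x].
    apply/forallP => x; apply/implyP => hxS.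
    case: (boolP (x \in ccomp lab A i)) => hx; last by rewrite Fout.
    have -> : x = val (Sub x hx : {x : T | x \in ccomp lab A i}) by rewrite SubK.
    rewrite FV; have := hgS (Sub x hx); rewrite inE SubK hxS /= => /eqP ->.
    by [].
  have := forallP hS F; rewrite hF hFS /= => /eqP F1.
  apply/eqP/permP => z; rewrite perm1; apply: val_inj; by rewrite -FV F1 perm1.
- move=> H; apply/forallP => f; apply/implyP => /andP[hf /forallP hfS].
  apply/eqP/permP => x; rewrite perm1.
  set i := cidx lab A (lab x).
  have hV : forall y, y \in ccomp lab A i -> f y \in ccomp lab A i.
    by move=> y; rewrite !inE (aut_cidx e_sym e_irr hcd hf).
  have [g hg] := restrict hV.
  have hga : is_aut (induced e (ccomp lab A i)) g.
    apply/forallP => a; apply/forallP => b; apply/eqP; rewrite /induced !hg.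
    exact: (autP hf).
  have hgS : [forall z in trace (ccomp lab A i) S, g z == z].
    apply/forallP => z; apply/implyP; rewrite inE => hz.
    apply/eqP/val_inj; rewrite hg; exact/eqP/(implyP (hfS _) hz).
  have := forallP (H i (cidx_mono lab A (Hk x))) g; rewrite hga hgS /= => /eqP g1.
  have hx : x \in ccomp lab A i by rewrite inE.
  by have := hg (Sub x hx); rewrite g1 perm1 SubK => <-.
Qed.

Lemma fixing_mono (U : finType) (e : rel U) (S S' : {set U}) :
  S \subset S' -> fixing_set e S -> fixing_set e S'.
Proof.
move=> hsub /forallP h; apply/forallP => f; apply/implyP => /andP[ha /forallP hS'].
apply: (implyP (h f)); rewrite ha /=; apply/forallP => x; apply/implyP => hx.
exact: (implyP (hS' x) (subsetP hsub x hx)).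
Qed.

Lemma card_trace (T : finType) (V S : {set T}) : #|trace V S| = #|S :&: V|.
Proof.
rewrite -(card_imset _ val_inj); apply: eq_card => y.
apply/imsetP/idP => [[z hz ->]|].
  by rewrite inE in hz; rewrite inE hz (valP z).
rewrite inE => /andP[hyS hyV]; exists (Sub y hyV); rewrite ?inE SubK //.
Qed.

Lemma card_bigcup_le (T : finType) n (F : 'I_n -> {set T}) :
  #|\bigcup_(i < n) F i| <= \sum_(i < n) #|F i|.
Proof.
apply: (big_ind2 (fun (X : {set T}) m => #|X| <= m)) => //.
- by rewrite cards0.
- move=> X1 n1 X2 n2 h1 h2; apply: leq_trans (leq_card_setU X1 X2).1 _.
  exact: leq_add.
Qed.

Theorem mainTheorem7 (T : finType) (e : rel T)
  (e_sym : symmetric e) (e_irr : irreflexive e)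
  (k : nat) (lab : T -> nat) (A : {set T}) :
  canonical_decomposition e k lab A ->
  let l := cidx lab A k in
  (forall S : {set T},
     fixing_set e S <->
     (forall i, i <= l ->
        fixing_set (induced e (ccomp lab A i)) (trace (ccomp lab A i) S))) /\
  Fix e = \sum_(i < l.+1) Fix (induced e (ccomp lab A i)).
Proof.
move=> hcd l.
have hcd' := hcd; case: hcd' => Hk Hex _.
have P1 := part1 e_sym e_irr hcd.
split; first exact: P1.
apply/eqP; rewrite eqn_leq; apply/andP; split.
- pose Sf (i : nat) : {set {x : T | x \in ccomp lab A i}} :=
    odflt setT [pick S | fixing_set (induced e (ccomp lab A i)) S &&
                        (#|S| == Fix (induced e (ccomp lab A i)))].
  have hSf : forall i, fixing_set (induced e (ccomp lab A i)) (Sf i) /\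
                       #|Sf i| = Fix (induced e (ccomp lab A i)).
    move=> i; rewrite /Sf; case: pickP => [S /andP[h1 /eqP h2] | hn] //=.
    have [S h1 h2] := Fix_att (induced e (ccomp lab A i)).
    by have := hn S; rewrite h1 h2 eqxx.
  pose S := \bigcup_(i < l.+1) [set val z | z in Sf i].
  have hfix : fixing_set e S.
    apply/P1 => i hi; apply: (fixing_mono _ (hSf i).1).
    apply/subsetP => z hz; rewrite inE.
    apply/bigcupP; exists (Ordinal (hi : i < l.+1)) => //=.
    exact: imset_f.
  apply: leq_trans (Fix_le hfix) _.
  apply: leq_trans (card_bigcup_le _) _.
  apply: leq_sum => i _; rewrite -(hSf i).2; exact: leq_imset_card.
- have [S hS hc] := Fix_att e; rewrite -hc.
  apply: (@leq_trans (\sum_(i < l.+1) #|S :&: ccomp lab A i|)).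
    apply: leq_sum => i _; rewrite -card_trace; apply: Fix_le.
    by apply: (iffLR (P1 S) hS); rewrite -ltnS.
  have hcard : forall i, #|S :&: ccomp lab A i| =
      \sum_(x in S) (cidx lab A (lab x) == i : nat).
    move=> i; rewrite -sum1_card [LHS]big_mkcond [RHS]big_mkcond /=.
    apply: eq_bigr => x _; rewrite !inE.
    by case: (x \in S); case: (_ == i).
  under eq_bigr => i _ do rewrite hcard.
  rewrite exchange_big /= -sum1_card leq_eqVlt; apply/orP; left; apply/eqP.
  apply: eq_bigr => x hx.
  have hlt : cidx lab A (lab x) < l.+1 by rewrite ltnS; apply: cidx_mono.
  rewrite (bigD1 (Ordinal hlt)) //= eqxx big1 // => i hi.
  by rewrite eq_sym; move: hi; rewrite -val_eqE /= => /negbTE ->.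
Qed.
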